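(* Let $0<m<L$ and $0<\alpha<2/(L+m)$. If $\delta\in[0,1)$ and \[ \rho \geq \left( 1-\frac{2 \alpha L m}{L+m} + \frac{\alpha \delta^2 (L + m -2 \alpha Lm )}{2- \alpha (L+m)}\right)^{1/2}, \] then there exists $c>0$ such that for every $f \in \mathcal{S}(m,L)$ (with reference point $x_\star$), every sequence $x(k)\in\mathbb{R}^n$ and every error sequence $e(k)\in\mathbb{R}^n$ satisfying, for all $k\ge 0$, \[ x(k+1) = x(k) - \alpha\big(\nabla f(x(k)) + e(k)\big), \qquad |e(k)| \leq \delta\, |\nabla f(x(k))|, \] we have $|x(k)-x_\star| \leq c\, \rho^k\, |x(0)-x_\star|$ for all $k \geq 0$.
   Context: For $0\le m<L$, $\mathcal{S}(m,L)$ denotes the set of $C^1$ functions $f:\mathbb{R}^n\to\mathbb{R}$ for which there is a reference point $x_\star\in\mathbb{R}^n$ such that for every $x\in\mathbb{R}^n$, $\langle m(x-x_\star) - \nabla f(x),\ L(x-x_\star) - \nabla f(x)\rangle \le 0$. The constant $c$ may depend on $m,L,\alpha,\delta,\rho$ but not on $f$, $x$ or $e$. *)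

(* Defs.v *)
From HB Require Import structures.
From mathcomp Require Import all_boot all_order all_algebra.
From mathcomp Require Import all_classical all_reals all_analysis.
Set Implicit Arguments. Unset Strict Implicit. Unset Printing Implicit Defensive.
Import Order.TTheory GRing.Theory Num.Theory.
Import numFieldNormedType.Exports.
Local Open Scope ring_scope.

(* Euclidean inner product and Euclidean norm on R^n = 'rV[R]_n.
   (The library's norm on 'rV_n is the sup norm, so we define |.| here.) *)
Definition dotv (R : realType) (n : nat) (u v : 'rV[R]_n) : R :=
  \sum_(i < n) u ord0 i * v ord0 i.

Definition enorm (R : realType) (n : nat) (u : 'rV[R]_n) : R :=
  Num.sqrt (dotv u u).

Definition C1_with_gradient (R : realType) (n : nat)
    (f : 'rV[R]_n -> R) (grad : 'rV[R]_n -> 'rV[R]_n) : Prop :=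
  (forall x, differentiable f x /\ forall h, 'd f x h = dotv (grad x) h)
  /\ continuous grad.

Definition in_S (R : realType) (n : nat) (m L : R)
    (f : 'rV[R]_n -> R) (grad : 'rV[R]_n -> 'rV[R]_n) (xs : 'rV[R]_n) : Prop :=
  C1_with_gradient f grad /\
  forall x, dotv (m *: (x - xs) - grad x) (L *: (x - xs) - grad x) <= 0.

(* Main.v *)
Require Import Defs.
From HB Require Import structures.
From mathcomp Require Import all_boot all_order all_algebra.
From mathcomp Require Import all_classical all_reals all_analysis.
From mathcomp Require Import ring lra.
Import Order.TTheory GRing.Theory Num.Theory.
Import numFieldNormedType.Exports.
Local Open Scope ring_scope.
Section D.
Context {R : realType} {n : nat}.
Implicit Types u v w : 'rV[R]_n.
Lemma dotvC u v : dotv u v = dotv v u.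
Proof. by rewrite /dotv; apply: eq_bigr => i _; rewrite mulrC. Qed.
Lemma dotvDl u v w : dotv (u + v) w = dotv u w + dotv v w.
Proof. by rewrite /dotv -big_split; apply: eq_bigr => i _; rewrite !mxE mulrDl. Qed.
Lemma dotvZl (a : R) u w : dotv (a *: u) w = a * dotv u w.
Proof. by rewrite /dotv mulr_sumr; apply: eq_bigr => i _; rewrite !mxE mulrA. Qed.
Lemma dotvNl u w : dotv (- u) w = - dotv u w.
Proof. by rewrite -scaleN1r dotvZl mulN1r. Qed.
Lemma dotvDr u v w : dotv w (u + v) = dotv w u + dotv w v.
Proof. by rewrite dotvC dotvDl !(dotvC w). Qed.
Lemma dotvZr (a : R) u w : dotv w (a *: u) = a * dotv w u.
Proof. by rewrite dotvC dotvZl dotvC. Qed.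
Lemma dotvNr u w : dotv w (- u) = - dotv w u.
Proof. by rewrite dotvC dotvNl dotvC. Qed.
Lemma dotv_ge0 u : 0 <= dotv u u.
Proof. by apply: sumr_ge0 => i _; rewrite -expr2 sqr_ge0. Qed.
Lemma enorm_sq u : enorm u ^+ 2 = dotv u u.
Proof. by rewrite /enorm sqr_sqrtr // dotv_ge0. Qed.
Lemma enorm_ge0 u : 0 <= enorm u.
Proof. by rewrite /enorm sqrtr_ge0. Qed.
Lemma dotv0 u w : dotv u u = 0 -> dotv w u = 0.
Proof.
move=> H; have H0 : forall i, u ord0 i = 0.
  move=> i; have /eqP := H; rewrite /dotv psumr_eq0; last by move=> j _; rewrite -expr2 sqr_ge0.
  by move/allP => /(_ i (mem_index_enum _)) /=; rewrite mulf_eq0 orbb => /eqP.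
by rewrite /dotv big1 // => i _; rewrite H0 mulr0.
Qed.
End D.
Lemma key (R : realType) (m L al de a b c E p q : R) :
  0 < m -> m < L -> 0 < al -> al * (L + m) < 2 -> 0 < de ->
  m * L * a - (L + m) * b + c <= 0 -> 0 <= a -> 0 <= c ->
  E <= de ^+ 2 * c ->
  (let t := al * de ^+ 2 * (L + m) / (2 - al * (L + m)) in
   0 <= t ^+ 2 * (a - 2 * al * b + al ^+ 2 * c) + 2 * t * al * (p - al * q) + al ^+ 2 * E) ->
  a - 2 * al * b + al ^+ 2 * c - 2 * al * p + 2 * al ^+ 2 * q + al ^+ 2 * E <=
  (1 - 2 * al * L * m / (L + m)
            + al * de ^+ 2 * (L + m - 2 * al * L * m)
              / (2 - al * (L + m))) * a.
Proof.
move=> hm hmL hal hs hde hS ha hc hE.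
set K := L + m; set s := 2 - al * K => /=.
set t := al * de ^+ 2 * K / s => hN.
have hK : 0 < K by rewrite /K; lra.
have hs0 : 0 < s by rewrite /s /K; lra.
have ht : 0 < t by rewrite /t; apply: divr_gt0 => //; rewrite !mulr_gt0 // exprn_gt0.
set Z := a - 2 * al * b + al ^+ 2 * c.
set D := _ + al ^+ 2 * E.
have h1 : t * D <= t * (1 + t) * Z + (1 + t) * al ^+ 2 * E.
  have -> : t * (1 + t) * Z + (1 + t) * al ^+ 2 * E = t * D +
    (t ^+ 2 * (a - 2 * al * b + al ^+ 2 * c) + 2 * t * al * (p - al * q) + al ^+ 2 * E).
    by rewrite /D /Z; ring.
  lra.
have hZ : Z <= (1 - 2 * al * m * L / K) * a - al * s / K * c.
  have -> : (1 - 2 * al * m * L / K) * a - al * s / K * c = Z - 2 * al / K * (m * L * a - K * b + c).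
    rewrite /Z /s; field; lra.
  have : 0 <= 2 * al / K * - (m * L * a - K * b + c).
    by apply: mulr_ge0; [apply: divr_ge0; lra | rewrite /K; lra].
  lra.
have hE2 : al ^+ 2 * E <= t * (al * s / K * c).
  have -> : t * (al * s / K * c) = al ^+ 2 * (de ^+ 2 * c).
    rewrite /t; field; lra.
  apply: ler_wpM2l => //; exact: sqr_ge0.
have h2 : t * D <= t * ((1 + t) * ((1 - 2 * al * m * L / K) * a)).
  have h3 : t * (1 + t) * Z <= t * (1 + t) * ((1 - 2 * al * m * L / K) * a - al * s / K * c).
    apply: ler_wpM2l => //; apply: mulr_ge0; lra.
  nra.
have h4 : D <= (1 + t) * ((1 - 2 * al * m * L / K) * a) by rewrite -(ler_pM2l ht).
apply: (le_trans h4); rewrite le_eqVlt; apply/orP; left; apply/eqP.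
rewrite /t /K /s; field; rewrite /K; lra.
Qed.


Lemma key0 (R : realType) (m L al a b c : R) :
  0 < m -> m < L -> 0 < al -> al * (L + m) < 2 ->
  m * L * a - (L + m) * b + c <= 0 -> 0 <= a -> 0 <= c ->
  a - 2 * al * b + al ^+ 2 * c - 2 * al * 0 + 2 * al ^+ 2 * 0 + al ^+ 2 * 0 <=
  (1 - 2 * al * L * m / (L + m)
            + al * 0 ^+ 2 * (L + m - 2 * al * L * m)
              / (2 - al * (L + m))) * a.
Proof.
move=> hm hmL hal hs hS ha hc.
rewrite !mulr0 expr0n /= mulr0 !mul0r addr0 subr0 !addr0.
have hK : 0 < L + m by lra.
have -> : (1 - 2 * al * L * m / (L + m)) * a = a - 2 * al * b + al ^+ 2 * c
   - 2 * al / (L + m) * (m * L * a - (L + m) * b + c) + al * (2 - al * (L + m)) / (L + m) * c.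
  field; lra.
have : 0 <= 2 * al / (L + m) * - (m * L * a - (L + m) * b + c).
  by apply: mulr_ge0; [apply: divr_ge0; lra | lra].
have : 0 <= al * (2 - al * (L + m)) / (L + m) * c.
  by apply: mulr_ge0 => //; apply: divr_ge0; [apply: mulr_ge0; lra | lra].
lra.
Qed.

Theorem proposition1p2 (R : realType) (n : nat) (m L alpha delta rho : R) :
  0 < m -> m < L -> 0 < alpha -> alpha < 2 / (L + m) ->
  0 <= delta -> delta < 1 ->
  Num.sqrt (1 - 2 * alpha * L * m / (L + m)
            + alpha * delta ^+ 2 * (L + m - 2 * alpha * L * m)
              / (2 - alpha * (L + m))) <= rho ->
  exists c : R, 0 < c /\
    forall (f : 'rV[R]_n -> R) (grad : 'rV[R]_n -> 'rV[R]_n) (xs : 'rV[R]_n)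
           (x e : nat -> 'rV[R]_n),
      in_S m L f grad xs ->
      (forall k, x k.+1 = x k - alpha *: (grad (x k) + e k)) ->
      (forall k, enorm (e k) <= delta * enorm (grad (x k))) ->
      forall k, enorm (x k - xs) <= c * rho ^+ k * enorm (x 0%N - xs).
Proof.
move=> hm hmL hal hal2 hde0 hde1 hrho.
have hK : 0 < L + m by lra.
have hs : alpha * (L + m) < 2.
  by move: hal2; rewrite ltr_pdivlMr // mulrC.
set X := (X in Num.sqrt X <= rho) in hrho.
have hrho0 : 0 <= rho by apply: le_trans hrho; apply: sqrtr_ge0.
have hX : X <= rho ^+ 2.
  case: (lerP 0 X) => hX0; last by apply: le_trans (ltW hX0) _; apply: sqr_ge0.
  rewrite -(sqr_sqrtr hX0); have := sqrtr_ge0 X; nra.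
exists 1; split => //.
move=> f grad xs x e [_ hS] hx he.
have step : forall k, enorm (x k.+1 - xs) <= rho * enorm (x k - xs).
  move=> k.
  set y := x k - xs; set g := grad (x k); set ek := e k.
  have hy' : x k.+1 - xs = y - alpha *: (g + ek) by rewrite hx /y addrAC.
  have hSk := hS (x k); rewrite -/y -/g in hSk.
  have hek := he k; rewrite -/g -/ek in hek; clearbody y g ek.
  move: hSk.
  rewrite !(dotvDl, dotvDr, dotvZl, dotvZr, dotvNl, dotvNr) (dotvC g y) => hSk.
  have hSk' : m * L * dotv y y - (L + m) * dotv y g + dotv g g <= 0 by lra.
  have hE : dotv ek ek <= delta ^+ 2 * dotv g g.
    rewrite -!enorm_sq.
    rewrite -exprMn ler_pXn2r // nnegrE ?enorm_ge0 ?mulr_ge0 ?enorm_ge0 //.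
  have hD : dotv (x k.+1 - xs) (x k.+1 - xs) <= X * dotv y y.
    rewrite hy' !(dotvDl, dotvDr, dotvZl, dotvZr, dotvNl, dotvNr) (dotvC g y) (dotvC ek y) (dotvC ek g).
    have ha := dotv_ge0 y; have hc := dotv_ge0 g.
    case: (ltrP 0 delta) => hd.
      have := @key R m L alpha delta (dotv y y) (dotv y g) (dotv g g) (dotv ek ek)
        (dotv y ek) (dotv g ek) hm hmL hal hs hd hSk' ha hc hE.
      set t := alpha * delta ^+ 2 * (L + m) / (2 - alpha * (L + m)).
      have hN := dotv_ge0 (t *: (y - alpha *: g) + alpha *: ek).
      move: hN.
      rewrite !(dotvDl, dotvDr, dotvZl, dotvZr, dotvNl, dotvNr) (dotvC g y) (dotvC ek y) (dotvC ek g) => hN.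
      have hN' : 0 <= t ^+ 2 * (dotv y y - 2 * alpha * dotv y g + alpha ^+ 2 * dotv g g)
        + 2 * t * alpha * (dotv y ek - alpha * dotv g ek) + alpha ^+ 2 * dotv ek ek.
        lra.
      move=> /(_ hN') H; rewrite /X; lra.
    have hd0 : delta = 0 by apply/eqP; rewrite eq_le hd hde0.
    have hE0 : dotv ek ek = 0.
      apply/eqP; rewrite eq_le dotv_ge0 andbT; move: hE; rewrite hd0 expr0n /= mul0r //.
    rewrite hE0 (dotv0 _ y hE0) (dotv0 _ g hE0).
    have := @key0 R m L alpha (dotv y y) (dotv y g) (dotv g g) hm hmL hal hs hSk' ha hc.
    rewrite /X hd0 => H; lra.
  have h1 := enorm_sq (x k.+1 - xs); have h2 := enorm_sq y.
  have h3 := enorm_ge0 (x k.+1 - xs); have h4 := enorm_ge0 y.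
  have h5 : X * dotv y y <= rho ^+ 2 * dotv y y by apply: ler_wpM2r => //; apply: dotv_ge0.
  rewrite -(@ler_pXn2r _ 2) // ?nnegrE ?mulr_ge0 // exprMn h1 h2; lra.
elim=> [|k IH]; first by rewrite expr0 !mul1r.
apply: le_trans (step k) _.
rewrite mul1r exprS -mulrA ler_wpM2l //; by rewrite mul1r in IH.
Qed.
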